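(* Let $G$ be a cubic graph, let $H$ be a hexagon graph of $G$, and let $W$ be the set of white edges of $H$. For every blue perfect matching $M$ of $H$, the set $M\cup W$ ($=M\,\Delta\, W$) is a disjoint union of cycles, and there is an embedding of $G$ on a closed orientable surface whose set of face boundaries is exactly the set of subgraphs of $G$ induced by the cycles of $M\Delta W$. Here the subgraph of $G$ induced by a cycle $C$ of $M\Delta W$ is the subgraph with edge set $\{uv\in E(G): e_{uv}\in C \text{ or } \bar e_{uv}\in C\}$. Conversely, every embedding of $G$ on a closed orientable surface (equivalently, every rotation system of $G$) arises in this way from some blue perfect matching of $H$.
   Context: Hexagon graph. A hexagon is a copy of $K_{3,3}$. Let $G=(V,E)$ be a cubic graph. A hexagon graph $H$ of $G$ is built as follows. (1) Replace each $v\in V$ by a hexagon $h_v$ on vertex set $\{v_i: i\in\mathbb{Z}_6\}$ with edge set $\{v_iv_{i+1}, v_iv_{i+3}: i\in\mathbb{Z}_6\}$, the hexagons being pairwise vertex-disjoint. (2) For each $v$ with $N_G(v)=\{u,w,z\}$, assign to the neighbours pairwise distinct indices $i_{v(u)},i_{v(w)},i_{v(z)}\in\{0,1,2\}\subset\mathbb{Z}_6$. (3) Let $X=\bigcup_v\{v_{2i}\}$ and $Y=\bigcup_v\{v_{2i+1}\}$. Replace each edge $uv\in E$ by two disjoint edges $e_{uv},\bar e_{uv}$: if $v_{i_{v(u)}}$ and $u_{i_{u(v)}}$ both lie in $X$ or both lie in $Y$, put $e_{uv}=v_{i_{v(u)}}u_{i_{u(v)}+3}$, $\bar e_{uv}=v_{i_{v(u)}+3}u_{i_{u(v)}}$;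 otherwise $e_{uv}=v_{i_{v(u)}}u_{i_{u(v)}}$, $\bar e_{uv}=v_{i_{v(u)}+3}u_{i_{u(v)}+3}$. The edges $v_iv_{i+3}$ are red, the edges $v_iv_{i+1}$ are blue, and the edges $e_{uv},\bar e_{uv}$ are white. A blue perfect matching of $H$ is a perfect matching consisting only of blue edges. Rotation system. A rotation system of a graph $G$ is a collection $\{\pi_v: v\in V(G)\}$ where $\pi_v$ is a cyclic permutation of the edges incident with $v$; it determines an embedding of $G$ on a closed orientable surface whose face boundaries are the closed walks $e_1e_2\cdots e_k$ with $e_i=v^iv^{i+1}$, $\pi_{v^{i+1}}(e_i)=e_{i+1}$, $e_{k+1}=e_1$, $k$ minimal. *)

(* Defs.v *)
From mathcomp Require Import all_boot.
Set Implicit Arguments. Unset Strict Implicit. Unset Printing Implicit Defensive.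

(* A cubic graph G: vertex type T : finType, adjacency e : rel T,
   symmetric, irreflexive (simple graph), every vertex of degree 3.
   An edge uv of G is represented by the 2-set [set u; v]. *)

Definition nbhd (T : finType) (e : rel T) (v : T) : {set T} := [set u | e v u].

Definition cubic (T : finType) (e : rel T) : Prop :=
  [/\ symmetric e, irreflexive e & forall v, #|nbhd e v| = 3].

Definition index_assignment (T : finType) (e : rel T) (idx : T -> T -> 'I_3) : Prop :=
  forall v, {in nbhd e v &, injective (idx v)}.

Definition hvert (T : finType) := (T * 'I_6)%type.

(* the vertex v_n of the hexagon h_v, index n taken mod 6 *)
Definition hv (T : finType) (v : T) (n : nat) : hvert T := (v, inord (n %% 6)).

Section Hex.
Variables (T : finType) (e : rel T) (idx : T -> T -> 'I_3).

Definition red_edges : {set {set hvert T}} :=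
  [set E | [exists v : T, [exists i : 'I_6, E == [set hv v i; hv v (i + 3)]]]].

Definition blue_edges : {set {set hvert T}} :=
  [set E | [exists v : T, [exists i : 'I_6, E == [set hv v i; hv v i.+1]]]].

(* v_{i_{v(u)}} and u_{i_{u(v)}} lie both in X or both in Y *)
Definition same_side (u v : T) : bool := odd (idx v u) == odd (idx u v).

Definition wedge (u v : T) : {set hvert T} :=
  if same_side u v then [set hv v (idx v u); hv u (idx u v + 3)]
  else [set hv v (idx v u); hv u (idx u v)].

Definition wedgebar (u v : T) : {set hvert T} :=
  if same_side u v then [set hv v (idx v u + 3); hv u (idx u v)]
  else [set hv v (idx v u + 3); hv u (idx u v + 3)].

Definition white_edges : {set {set hvert T}} :=
  [set E | [exists uv : T * T,
     e uv.1 uv.2 && ((E == wedge uv.1 uv.2) || (E == wedgebar uv.1 uv.2))]].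

Definition hex_edges : {set {set hvert T}} :=
  red_edges :|: blue_edges :|: white_edges.

Definition deg_in (F : {set {set hvert T}}) (x : hvert T) : nat :=
  #|[set E in F | x \in E]|.

Definition perfect_matching (M : {set {set hvert T}}) : Prop :=
  M \subset hex_edges /\ forall x : hvert T, deg_in M x = 1.

Definition blue_perfect_matching (M : {set {set hvert T}}) : Prop :=
  perfect_matching M /\ M \subset blue_edges.

Definition disjoint_union_of_cycles (F : {set {set hvert T}}) : Prop :=
  (forall E, E \in F -> #|E| = 2) /\
  (forall x : hvert T, deg_in F x = 0 \/ deg_in F x = 2).

Definition share_rel (F : {set {set hvert T}}) : rel {set hvert T} :=
  fun E1 E2 => [&& E1 \in F, E2 \in F & ~~ [disjoint E1 & E2]].

(* The cycles (connected components, as edge sets) of F. *)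
Definition cycles_of (F : {set {set hvert T}}) : {set {set {set hvert T}}} :=
  [set [set E' | connect (share_rel F) E E'] | E in F].

Definition induced_subgraph (C : {set {set hvert T}}) : {set {set T}} :=
  [set [set uv.1; uv.2] | uv in [set uv : T * T |
     e uv.1 uv.2 && ((wedge uv.1 uv.2 \in C) || (wedgebar uv.1 uv.2 \in C))]].

Definition cycle_subgraphs (M : {set {set hvert T}}) : {set {set {set T}}} :=
  [set induced_subgraph C | C in cycles_of (M :|: white_edges)].

End Hex.

Section Rot.
Variables (T : finType) (e : rel T).

(* rot v is a cyclic permutation of the edges incident with v, i.e. of
   the neighbours of v (G is simple). *)
Definition rotation_system (rot : T -> T -> T) : Prop :=
  forall v,
  [/\ {in nbhd e v, forall u, rot v u \in nbhd e v},
      {in nbhd e v &, injective (rot v)} &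
      {in nbhd e v &, forall u w, exists k, iter k (rot v) u = w}].

(* darts (v^i, v^{i+1}); successor along a face: e_{i+1} = pi_{v^{i+1}}(e_i) *)
Definition face_step (rot : T -> T -> T) (d : T * T) : T * T :=
  (d.2, rot d.2 d.1).

Definition face_edges (rot : T -> T -> T) (d : T * T) : {set {set T}} :=
  [set [set d'.1; d'.2] | d' in [set d' | fconnect (face_step rot) d d']].

Definition faces (rot : T -> T -> T) : {set {set {set T}}} :=
  [set face_edges rot d | d in [set d : T * T | e d.1 d.2]].

End Rot.

(* Main.v *)
Require Import Defs.
From mathcomp Require Import all_boot.
Set Implicit Arguments. Unset Strict Implicit. Unset Printing Implicit Defensive.
Lemma card3 (X : finType) (a b c : X) : a != b -> a != c -> b != c ->
  #|[set a; b; c]| = 3.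
Proof.
move=> ab ac bc; rewrite [[set a; b; c]]setUC cardsU1 cards2 ab !inE.
by rewrite ![c == _]eq_sym (negbTE ac) (negbTE bc).
Qed.

Lemma three_orbit (X : finType) (A : {set X}) (f : X -> X) (u : X) :
  #|A| = 3 -> {in A, forall x, f x \in A} -> {in A &, injective f} ->
  {in A, forall x, f x != x} -> u \in A ->
  A = [set u; f u; f (f u)] /\ f (f (f u)) = u.
Proof.
move=> cA fA finj ffix uA.
have fuA := fA _ uA; have ffuA := fA _ fuA; have fffuA := fA _ ffuA.
have n1 : u != f u by rewrite eq_sym ffix.
have n2 : f u != f (f u) by rewrite eq_sym ffix.
have n3 : u != f (f u).
  apply/negP => /eqP h.
  have sB : [set u; f u] \subset A by apply/subsetP => y /set2P[]->.
  have : #|A :\: [set u; f u]| == 1.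
    move: (cardsID [set u; f u] A); rewrite (setIidPr sB) cards2 n1 cA => hh.
    by rewrite -(eqn_add2l 2) hh.
  case/cards1P => z hz.
  have zA : z \in A :\: [set u; f u] by rewrite hz set11.
  move: (zA); rewrite inE => /andP[zB' zA'].
  have fzA : f z \in A :\: [set u; f u].
    rewrite inE fA // andbT; apply/set2P => -[] hfz.
      move: zB'; rewrite (finj z (f u)) ?set22 //; by rewrite -h.
    by move: zB'; rewrite (finj z u) ?set21.
  by move: fzA; rewrite hz inE => /eqP /eqP; rewrite (negbTE (ffix _ zA')).
have hA : A = [set u; f u; f (f u)].
  apply/eqP; rewrite eq_sym eqEcard card3 // cA leqnn andbT.
  by apply/subsetP => y; rewrite !inE => /orP[/orP[]|] /eqP ->.
split=> //.
move: fffuA; rewrite {1}hA !inE => /orP[/orP[]|] /eqP h //.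
  by move: n3; rewrite (finj _ _ ffuA uA h) eqxx.
by move: (ffix _ ffuA); rewrite h eqxx.
Qed.

Lemma three_cyc (X : finType) (A : {set X}) (f : X -> X) :
  #|A| = 3 -> {in A, forall x, f x \in A} -> {in A &, injective f} ->
  {in A, forall x, f x != x} ->
  {in A &, forall u w, exists k, iter k f u = w}.
Proof.
move=> cA fA finj ffix u w uA wA.
case: (three_orbit cA fA finj ffix uA) => hA _.
move: wA; rewrite hA !inE => /orP[/orP[]|] /eqP ->.
- by exists 0.
- by exists 1.
- by exists 2.
Qed.

Lemma cyc_nofix (X : finType) (A : {set X}) (f : X -> X) :
  #|A| = 3 -> {in A &, forall u w, exists k, iter k f u = w} ->
  {in A, forall x, f x != x}.
Proof.
move=> cA cyc x xA; apply/eqP => fx.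
have : 0 < #|A :\ x|.
  by move: (cardsD1 x A); rewrite xA cA => /eqP; rewrite eqSS => /eqP <-.
case/card_gt0P => w; rewrite !inE => /andP[wx wA].
case: (cyc x w xA wA) => k; rewrite iter_fix // => h.
by rewrite h eqxx in wx.
Qed.

Definition prep (p : bool) (k : nat) : nat := if odd k == p then k else k + 3.

Lemma prep_lt p k : k < 3 -> prep p k < 6.
Proof. by rewrite /prep; case: k => [|[|[|]]] //; case: p. Qed.
Lemma prep_odd p k : k < 3 -> odd (prep p k) = p.
Proof. by rewrite /prep; case: k => [|[|[|]]] //; case: p. Qed.
Lemma prep_mod p k : k < 3 -> prep p k %% 3 = k.
Proof. by rewrite /prep; case: k => [|[|[|]]] //; case: p. Qed.
Lemma prep_id i : i < 6 -> prep (odd i) (i %% 3) = i.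
Proof. by case: i => [|[|[|[|[|[|]]]]]]. Qed.
Lemma prep_blue i k : i < 6 -> k < 3 -> k != i %% 3 ->
  prep (~~ odd i) k = i.+1 %% 6 \/ i = (prep (~~ odd i) k).+1 %% 6.
Proof. by case: i => [|[|[|[|[|[|]]]]]] // _; case: k => [|[|[|]]] //; auto. Qed.
Lemma blue_odd i j : i < 6 -> j < 6 -> (j = i.+1 %% 6 \/ i = j.+1 %% 6) -> odd j = ~~ odd i.
Proof.
by case: i => [|[|[|[|[|[|]]]]]] //; case: j => [|[|[|[|[|[|]]]]]] // _ _ [].
Qed.
Lemma blue_mod3 i j : i < 6 -> j < 6 -> (j = i.+1 %% 6 \/ i = j.+1 %% 6) -> j %% 3 != i %% 3.
Proof.
by case: i => [|[|[|[|[|[|]]]]]] //; case: j => [|[|[|[|[|[|]]]]]] // _ _ [].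
Qed.
Lemma odd_mod3_inj i j : i < 6 -> j < 6 -> odd i = odd j -> i %% 3 = j %% 3 -> i = j.
Proof. by case: i => [|[|[|[|[|[|]]]]]] //; case: j => [|[|[|[|[|[|]]]]]]. Qed.
Lemma mod6_cases i : i < 6 -> i = i %% 3 \/ i = i %% 3 + 3.
Proof. by case: i => [|[|[|[|[|[|]]]]]] //; auto. Qed.

Lemma hv2 (T : finType) (v : T) n : nat_of_ord (hv v n).2 = n %% 6.
Proof. by rewrite /hv /= inordK // ltn_pmod. Qed.
Lemma hv1 (T : finType) (v : T) n : (hv v n).1 = v.
Proof. by []. Qed.
Lemma hv_val (T : finType) (x : hvert T) : hv x.1 x.2 = x.
Proof. case: x => v i; rewrite /hv /= modn_small ?inord_val //. Qed.
Lemma hv_eq (T : finType) (x : hvert T) n : x.1 = (hv x.1 n).1 -> nat_of_ord x.2 = n %% 6 -> x = hv x.1 n.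
Proof. case: x => v i /= _ h; rewrite /hv /=; congr pair; apply: val_inj; rewrite /= inordK ?ltn_pmod //. Qed.
Section Main.
Variables (T : finType) (e : rel T) (idx : T -> T -> 'I_3).
Hypothesis (hcub : cubic e) (hidx : index_assignment e idx).

Lemma esymE u v : e u v = e v u.
Proof. by case: hcub => s _ _; rewrite s. Qed.
Lemma eirr v : e v v = false.
Proof. by case: hcub => _ i _; rewrite i. Qed.
Lemma in_nbhd v u : (u \in nbhd e v) = e v u.
Proof. by rewrite inE. Qed.

Definition nbn (v : T) (k : nat) : T :=
  odflt v [pick u in nbhd e v | (idx v u : nat) == k %% 3].

Lemma nbn_spec v k : nbn v k \in nbhd e v /\ (idx v (nbn v k) : nat) = k %% 3.
Proof.
rewrite /nbn; case: pickP => [u /andP[hu /eqP hk] //|H].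
have hk : (inord (k %% 3) : 'I_3) \in idx v @: nbhd e v.
  have -> : idx v @: nbhd e v = setT.
    apply/eqP; rewrite eqEcard subsetT /= cardsT card_ord card_in_imset //.
    by case: hcub => _ _ ->.
  by rewrite inE.
case/imsetP: hk => u hu hk.
by move: (H u); rewrite hu -hk /= inordK ?ltn_pmod // eqxx.
Qed.

Lemma nbn_in v k : e v (nbn v k).
Proof. by rewrite -in_nbhd; case: (nbn_spec v k). Qed.
Lemma idx_nbn v k : (idx v (nbn v k) : nat) = k %% 3.
Proof. by case: (nbn_spec v k). Qed.
Lemma nbn_mod v k : nbn v (k %% 3) = nbn v k.
Proof. by rewrite /nbn modn_mod. Qed.
Lemma nbn_idx v u : e v u -> nbn v (idx v u) = u.
Proof.
move=> h; have hi : {in nbhd e v &, injective (idx v)} := @hidx v.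
apply: hi; rewrite ?in_nbhd ?nbn_in //.
by apply: val_inj; rewrite /= idx_nbn modn_small.
Qed.
Lemma nbn_neq v k : nbn v k != v.
Proof. by apply/eqP=> h; move: (nbn_in v k); rewrite h eirr. Qed.

Definition om (x : hvert T) : hvert T :=
  let w := nbn x.1 x.2 in hv w (prep (~~ odd x.2) (idx w x.1)).

Lemma om1 x : (om x).1 = nbn x.1 x.2.
Proof. by []. Qed.
Lemma om2 x : nat_of_ord (om x).2 = prep (~~ odd x.2) (idx (nbn x.1 x.2) x.1).
Proof. by rewrite hv2 modn_small // prep_lt. Qed.
Lemma om_neq1 x : (om x).1 != x.1.
Proof. by rewrite om1 nbn_neq. Qed.

Lemma omK x : om (om x) = x.
Proof.
case: x => v i.
have hw := nbn_in v i.
rewrite {1}/om om1 om2 /=.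
set w := nbn v i.
set j := prep _ _.
have hj : j %% 3 = idx w v by rewrite prep_mod.
have -> : nbn w j = v by rewrite -nbn_mod hj nbn_idx // esymE.
rewrite prep_odd // negbK.
rewrite idx_nbn prep_id //.
by rewrite (hv_val (v, i)).
Qed.

Lemma om_inj : injective om.
Proof. exact: (can_inj omK). Qed.

Lemma om_hv v u (k : nat) : e u v -> k < 6 -> k %% 3 = idx v u ->
  om (hv v k) = hv u (prep (~~ odd k) (idx u v)).
Proof.
move=> huv hk hm; rewrite /om hv1 hv2 (modn_small hk).
by rewrite -nbn_mod hm nbn_idx // esymE.
Qed.

Lemma wedge_om u v : e u v ->
  wedge idx u v = [set hv v (idx v u); om (hv v (idx v u))].
Proof.
move=> huv; have h6 : idx v u < 6 by apply: (leq_trans (ltn_ord _)).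
rewrite (@om_hv v u) ?modn_small //.
rewrite /wedge /same_side; case: ifP => h; congr [set _; hv _ _];
by rewrite /prep; move: h; case: (odd (idx v u)); case: (odd (idx u v)).
Qed.

Lemma wedgebar_om u v : e u v ->
  wedgebar idx u v = [set hv v (idx v u + 3); om (hv v (idx v u + 3))].
Proof.
move=> huv; have h6 : idx v u + 3 < 6 by rewrite (ltn_add2r 3 _ 3).
rewrite (@om_hv v u) ?modnDr ?modn_small //.
have -> : odd (idx v u + 3) = ~~ odd (idx v u) by rewrite oddD addbT.
rewrite negbK /wedgebar /same_side; case: ifP => h; congr [set _; hv _ _];
by rewrite /prep; move: h; case: (odd (idx v u)); case: (odd (idx u v)).
Qed.

Lemma om_white (x : hvert T) : e (nbn x.1 x.2) x.1 /\
  ([set x; om x] = wedge idx (nbn x.1 x.2) x.1 \/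
   [set x; om x] = wedgebar idx (nbn x.1 x.2) x.1).
Proof.
case: x => v i /=; set u := nbn v i.
have hvu : e v u by apply: nbn_in.
have huv : e u v by rewrite esymE.
split => //.
have hi : (idx v u : nat) = i %% 3 by rewrite idx_nbn.
case: (mod6_cases (ltn_ord i)) => h.
  left; rewrite wedge_om // hi -h.
  by rewrite (hv_val (v, i)).
right; rewrite wedgebar_om // hi -h.
by rewrite (hv_val (v, i)).
Qed.

Lemma white_eq : white_edges e idx = [set [set x; om x] | x : hvert T].
Proof.
apply/setP => E; rewrite inE; apply/existsP/imsetP.
  case=> [[u v]] /= /andP[huv /orP[] /eqP ->].
    by rewrite wedge_om //; eexists.
  by rewrite wedgebar_om //; eexists.
case=> x _ ->; exists (nbn x.1 x.2, x.1) => /=.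
case: (om_white x) => -> [] -> ; by rewrite eqxx ?orbT.
Qed.

Lemma set2_eq (X : finType) (x y p q : X) : [set x; y] = [set p; q] -> p != q ->
  (x = p /\ y = q) \/ (x = q /\ y = p).
Proof.
move=> h npq.
have hx : x \in [set p; q] by rewrite -h set21.
have hy : y \in [set p; q] by rewrite -h set22.
have hp : p \in [set x; y] by rewrite h set21.
have hq : q \in [set x; y] by rewrite h set22.
case/set2P: hx => hx; case/set2P: hy => hy; subst; auto.
  by case/set2P: hq => h1; rewrite h1 eqxx in npq.
by case/set2P: hp => h1; rewrite h1 eqxx in npq.
Qed.

Lemma deg_inv (X : finType) (f : X -> X) (x : X) : (forall y, f (f y) = y) ->
  [set E in [set [set y; f y] | y : X] | x \in E] = [set [set x; f x]].
Proof.
move=> fK; apply/setP => E; rewrite !inE; apply/andP/eqP.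
  case=> /imsetP[y _ ->] /set2P[]->; first by [].
  by rewrite fK setUC.
move=> ->; split; first by apply: imset_f.
by rewrite set21.
Qed.

Section Mu.
Variable mu : hvert T -> hvert T.
Hypothesis muK : forall x, mu (mu x) = x.
Hypothesis mublue : forall x, (mu x).1 = x.1 /\
  (nat_of_ord (mu x).2 = (x.2).+1 %% 6 \/ nat_of_ord x.2 = ((mu x).2).+1 %% 6).

Lemma mu1 x : (mu x).1 = x.1. Proof. by case: (mublue x). Qed.
Lemma mu_odd x : odd (mu x).2 = ~~ odd x.2.
Proof. by case: (mublue x) => _ h; apply: blue_odd. Qed.
Lemma mu_neq x : mu x != x.
Proof. by apply/eqP => h; move: (mu_odd x); rewrite h; case: (odd _). Qed.
Lemma om_odd x : odd (om x).2 = ~~ odd x.2.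
Proof. by rewrite om2 prep_odd. Qed.
Lemma mu_inj : injective mu.
Proof. exact: (can_inj muK). Qed.

Definition Mset : {set {set hvert T}} := [set [set x; mu x] | x : hvert T].
Definition Wset : {set {set hvert T}} := [set [set x; om x] | x : hvert T].
Definition Fset := Mset :|: Wset.

Lemma MW_neq x y : [set x; mu x] != [set y; om y].
Proof.
apply/eqP => h.
have : x \in [set y; om y] by rewrite -h set21.
have : mu x \in [set y; om y] by rewrite -h set22.
case/set2P => h1; case/set2P => h2.
- by move: (mu_neq x); rewrite h1 h2 eqxx.
- by move: (om_neq1 y); rewrite -h2 -h1 mu1 eqxx.
- by move: (om_neq1 y); rewrite -h1 -h2 mu1 eqxx.
- by move: (mu_neq x); rewrite h1 h2 eqxx.
Qed.

Lemma MW_disj : [disjoint Mset & Wset].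
Proof.
rewrite -setI_eq0; apply/eqP/setP => E; rewrite !inE.
apply/andP => -[/imsetP[x _ ->] /imsetP[y _ h]].
by move: (MW_neq x y); rewrite h eqxx.
Qed.

Lemma deg_F x : [set E in Fset | x \in E] = [set [set x; mu x]; [set x; om x]].
Proof.
apply/setP => E; rewrite inE /Fset inE.
have h1 := deg_inv x muK; have h2 := deg_inv x omK.
rewrite !inE; apply/idP/idP.
  case/andP => /orP[] hE hx.
    by move/setP: h1 => /(_ E); rewrite !inE hE hx /= => <-.
  by move/setP: h2 => /(_ E); rewrite !inE hE hx /= => <-; rewrite orbT.
case/orP => /eqP ->; rewrite set21 andbT.
  by apply/orP; left; apply: imset_f.
by apply/orP; right; apply: imset_f.
Qed.

Lemma deg_F2 x : deg_in Fset x = 2.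
Proof.
rewrite /deg_in deg_F cards2.
suff -> : ([set x; mu x] != [set x; om x]) by [].
exact: MW_neq.
Qed.

Lemma Mset_blue : Mset \subset blue_edges T.
Proof.
apply/subsetP => E /imsetP[x _ ->]; rewrite inE.
case: (mublue x) => h1 [] h2.
  apply/existsP; exists x.1; apply/existsP; exists x.2.
  have hm : mu x = hv x.1 x.2.+1 by rewrite -h1; apply: hv_eq.
  by rewrite hv_val -hm.
apply/existsP; exists (mu x).1; apply/existsP; exists (mu x).2.
have hm : x = hv (mu x).1 (mu x).2.+1 by rewrite h1; apply: hv_eq.
rewrite (hv_val (mu x)).
by rewrite -hm setUC.
Qed.

Lemma Mset_bpm : blue_perfect_matching e idx Mset.
Proof.
split; last exact: Mset_blue.
split.
  apply: (subset_trans Mset_blue); rewrite /hex_edges.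
  by apply/subsetP => E hE; rewrite !in_setU hE orbT.
by move=> x; rewrite /deg_in deg_inv // cards1.
Qed.


Definition ent (d : T * T) : hvert T := hv d.2 (prep false (idx d.2 d.1)).
Definition rotm (v u : T) : T := nbn v (mu (ent (u, v))).2.
Definition phi x := om (mu x).

Lemma ent1 d : (ent d).1 = d.2. Proof. by []. Qed.
Lemma ent2 d : nat_of_ord (ent d).2 = prep false (idx d.2 d.1).
Proof. by rewrite hv2 modn_small // prep_lt. Qed.
Lemma ent_odd d : odd (ent d).2 = false.
Proof. by rewrite ent2 prep_odd. Qed.
Lemma ent_mod d : (ent d).2 %% 3 = idx d.2 d.1.
Proof. by rewrite ent2 prep_mod. Qed.

Lemma phi_inj : injective phi.
Proof. by move=> x y /om_inj /mu_inj. Qed.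

Lemma rotm_in v u : e v (rotm v u). Proof. exact: nbn_in. Qed.
Lemma rotm_idx v u : (idx v (rotm v u) : nat) = (mu (ent (u,v))).2 %% 3.
Proof. exact: idx_nbn. Qed.

Lemma rotm_inj v : {in nbhd e v &, injective (rotm v)}.
Proof.
move=> u1 u2 h1 h2 h.
have hm : (mu (ent (u1, v))).2 %% 3 = (mu (ent (u2, v))).2 %% 3.
  by rewrite -!rotm_idx h.
have ho : odd (mu (ent (u1, v))).2 = odd (mu (ent (u2, v))).2 by rewrite !mu_odd !ent_odd.
have hb := odd_mod3_inj (ltn_ord _) (ltn_ord _) ho hm.
have : mu (ent (u1, v)) = mu (ent (u2, v)).
  have e1 : (mu (ent (u1,v))).1 = (mu (ent (u2,v))).1 by rewrite !mu1.
  have e2 : (mu (ent (u1,v))).2 = (mu (ent (u2,v))).2 by apply: val_inj.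
  move: e1 e2; case: (mu (ent (u1, v))) => a1 b1; case: (mu (ent (u2, v))) => a2 b2 /= -> ->.
  by [].
move/mu_inj => he.
have : (idx v u1 : nat) = idx v u2.
  have h1' := ent_mod (u1,v); have h2' := ent_mod (u2,v).
  by rewrite /= -h1' -h2' he.
move/val_inj; apply: (@hidx v) => //.
Qed.

Lemma rotm_nofix v u : rotm v u != u.
Proof.
apply/eqP => h.
have : (idx v (rotm v u) : nat) = idx v u by rewrite h.
rewrite rotm_idx -(@ent_mod (u, v)) => /eqP; apply/negP.
by case: (mublue (ent (u, v))) => _ hb; apply: blue_mod3.
Qed.

Lemma card_nbhd v : #|nbhd e v| = 3.
Proof. by case: hcub. Qed.

Lemma rotm_sys : rotation_system e rotm.
Proof.
move=> v; split.
- by move=> u _; rewrite in_nbhd rotm_in.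
- exact: rotm_inj.
- apply: three_cyc; rewrite ?card_nbhd //.
  + by move=> u _; rewrite in_nbhd rotm_in.
  + exact: rotm_inj.
  + by move=> u _; apply: rotm_nofix.
Qed.

Notation fs := (face_step rotm).

Lemma ent_step d : e d.1 d.2 -> ent (fs d) = phi (ent d).
Proof.
case: d => u v /= huv.
rewrite /phi /om mu1 ent1 /= mu_odd ent_odd /=.
by [].
Qed.

Lemma dart_step d : e d.1 d.2 -> e (fs d).1 (fs d).2.
Proof. by case: d => u v /= _; apply: rotm_in. Qed.

Lemma ent_iter d n : e d.1 d.2 ->
  e (iter n fs d).1 (iter n fs d).2 /\ ent (iter n fs d) = iter n phi (ent d).
Proof.
move=> hd; elim: n => [|n [h1 h2]] //=.
by rewrite ent_step // h2 dart_step.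
Qed.

Definition orb a := [set y | fconnect phi a y].
Definition Cyc a : {set {set hvert T}} :=
  [set [set y; mu y] | y in orb a] :|: [set [set y; om y] | y in orb a].

Lemma orb_ent d : e d.1 d.2 ->
  orb (ent d) = [set ent d' | d' in [set d' | fconnect fs d d']].
Proof.
move=> hd; apply/setP => y; rewrite inE; apply/idP/imsetP.
  move/iter_findex => <-; exists (iter (findex phi (ent d) y) fs d).
    by rewrite inE fconnect_iter.
  by case: (ent_iter (findex phi (ent d) y) hd).
case=> d'; rewrite inE => /iter_findex <- ->.
by case: (ent_iter (findex fs d d') hd) => _ ->; apply: fconnect_iter.
Qed.


Lemma in_orb a y : (y \in orb a) = fconnect phi a y.
Proof. by rewrite inE. Qed.

Lemma orb_self a : a \in orb a.
Proof. by rewrite in_orb connect0. Qed.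

Lemma orb_phi a y : y \in orb a -> phi y \in orb a.
Proof.
rewrite !in_orb => h; apply: (connect_trans h); exact: fconnect1.
Qed.

Lemma orb_phiV a y : phi y \in orb a -> y \in orb a.
Proof.
rewrite !in_orb => h; apply: (connect_trans h).
by rewrite fconnect_sym ?fconnect1 //; apply: phi_inj.
Qed.

Lemma F_at z E : E \in Fset -> z \in E -> E = [set z; mu z] \/ E = [set z; om z].
Proof.
move=> hE hz.
have : E \in [set E in Fset | z \in E] by rewrite inE hE hz.
by rewrite deg_F => /set2P.
Qed.

Lemma Cyc_vert a z : (z \in orb a) || (mu z \in orb a) ->
  [set z; mu z] \in Cyc a /\ [set z; om z] \in Cyc a.
Proof.
case/orP => hz.
  by split; rewrite inE; apply/orP; [left|right]; apply: imset_f.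
split; rewrite inE; apply/orP.
  by left; apply/imsetP; exists (mu z) => //; rewrite muK setUC.
right; apply/imsetP; exists (phi (mu z)); first by apply: orb_phi.
by rewrite /phi omK muK setUC.
Qed.

Lemma Cyc_touch a E z : E \in Cyc a -> z \in E -> (z \in orb a) || (mu z \in orb a).
Proof.
rewrite inE => /orP[] /imsetP[y hy ->] /set2P[] ->.
- by rewrite hy.
- by rewrite muK hy orbT.
- by rewrite hy.
- apply/orP; right; apply: orb_phiV.
  by rewrite /phi muK omK.
Qed.

Lemma Cyc_sub a : Cyc a \subset Fset.
Proof.
apply/subsetP => E; rewrite inE !in_setU => /orP[] /imsetP[y _ ->].
  by apply/orP; left; apply: imset_f.
by apply/orP; right; apply: imset_f.
Qed.

Lemma share_intro E1 E2 z : E1 \in Fset -> E2 \in Fset -> z \in E1 -> z \in E2 ->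
  share_rel Fset E1 E2.
Proof.
move=> h1 h2 z1 z2; rewrite /share_rel h1 h2 /= -setI_eq0.
by apply/set0Pn; exists z; rewrite inE z1 z2.
Qed.

Lemma share_sym : symmetric (share_rel Fset).
Proof.
by move=> E1 E2; rewrite /share_rel disjoint_sym andbCA.
Qed.

Lemma Cyc_closed a E1 E2 : E1 \in Cyc a -> share_rel Fset E1 E2 -> E2 \in Cyc a.
Proof.
move=> h1 /and3P[_ h2]; rewrite -setI_eq0 => /set0Pn[z]; rewrite inE => /andP[z1 z2].
case: (Cyc_vert (Cyc_touch h1 z1)) => c1 c2.
by case: (F_at h2 z2) => ->.
Qed.

Lemma Cyc_connM a n :
  connect (share_rel Fset) [set a; mu a] [set iter n phi a; mu (iter n phi a)].
Proof.
elim: n => [|n IH] //=; apply: (connect_trans IH).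
set y := iter n phi a.
have hM : forall x, [set x; mu x] \in Fset by move=> x; apply/setUP; left; apply: imset_f.
have hW : forall x, [set x; om x] \in Fset by move=> x; apply/setUP; right; apply: imset_f.
apply: (@connect_trans _ _ [set mu y; om (mu y)]); apply: connect1.
  by apply: (share_intro (z := mu y)); rewrite ?hM ?hW ?set21 ?set22.
by apply: (share_intro (z := phi y)); rewrite ?hM ?hW ?set21 ?set22.
Qed.

Lemma Cyc_conn a E : E \in Cyc a -> connect (share_rel Fset) [set a; mu a] E.
Proof.
have hM : forall x, [set x; mu x] \in Fset by move=> x; apply/setUP; left; apply: imset_f.
have hW : forall x, [set x; om x] \in Fset by move=> x; apply/setUP; right; apply: imset_f.
rewrite inE => /orP[] /imsetP[y]; rewrite in_orb => /iter_findex hy ->.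
  by rewrite -hy; apply: Cyc_connM.
apply: (connect_trans (Cyc_connM a (findex phi a y))); rewrite hy.
apply: connect1; apply: (share_intro (z := y)); by rewrite ?hM ?hW ?set21.
Qed.

Lemma comp_Cyc a E : E \in Cyc a ->
  [set E' | connect (share_rel Fset) E E'] = Cyc a.
Proof.
move=> hE; apply/setP => E'; rewrite inE; apply/idP/idP.
  case/connectP => p hp ->; elim: p E hE hp => [|E2 p IH] E1 hE1 //=.
  by case/andP => h12 hp; apply: IH hp; apply: (Cyc_closed hE1).
move=> hE'; apply: (connect_trans _ (Cyc_conn hE')).
by rewrite (sym_connect_sym share_sym); apply: Cyc_conn.
Qed.

Lemma Cyc_self a : [set a; mu a] \in Cyc a /\ [set a; om a] \in Cyc a.
Proof. by apply: Cyc_vert; rewrite orb_self. Qed.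

Lemma Wcyc_pair a x u v : x.1 = v -> (om x).1 = u -> [set x; om x] \in Cyc a ->
  exists2 y, y \in orb a & [set u; v] = [set y.1; (om y).1].
Proof.
move=> h1 h2; rewrite inE => /orP[] /imsetP[y hy hxy].
  by move: (MW_neq y x); rewrite hxy eqxx.
exists y => //.
have ny : y != om y by apply/eqP => h; move: (om_neq1 y); rewrite -h eqxx.
case: (set2_eq hxy ny) => -[hx hox].
  by rewrite -h1 -h2 hx setUC.
by rewrite -h1 -h2 hox hx.
Qed.

Lemma induced_Cyc a :
  induced_subgraph e idx (Cyc a) = [set [set y.1; (om y).1] | y in orb a].
Proof.
apply/setP => G; apply/imsetP/imsetP.
  case=> [[u v]]; rewrite inE /= => /andP[huv hw] ->.
  have hv6 : idx v u < 6 by apply: (leq_trans (ltn_ord _)).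
  have hv6' : idx v u + 3 < 6 by rewrite (ltn_add2r 3 _ 3).
  case/orP: hw.
    rewrite wedge_om // => hw.
    have h2 : (om (hv v (idx v u))).1 = u by rewrite (@om_hv v u) ?modn_small.
    by have [y hy ->] := Wcyc_pair (hv1 v _) h2 hw; exists y.
  rewrite wedgebar_om // => hw.
  have h2 : (om (hv v (idx v u + 3))).1 = u by rewrite (@om_hv v u) ?modnDr ?modn_small.
  by have [y hy ->] := Wcyc_pair (hv1 v _) h2 hw; exists y.
case=> y hy ->; exists (nbn y.1 y.2, y.1); last by rewrite om1 setUC.
case: (om_white y) => huv hw.
rewrite inE /= huv /=.
case: (@Cyc_vert a y); first by rewrite hy.
by move=> _; case: hw => <- ->; rewrite ?orbT.
Qed.


Lemma face_cyc d : e d.1 d.2 ->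
  face_edges rotm d = induced_subgraph e idx (Cyc (ent d)).
Proof.
move=> hd; rewrite induced_Cyc orb_ent // -imset_comp.
apply: eq_in_imset => d'; rewrite inE => /iter_findex hd'.
have [hd'' _] := ent_iter (findex fs d d') hd; rewrite hd' in hd''.
rewrite /comp om1 ent1 ent2 -nbn_mod prep_mod //.
rewrite nbn_idx; first exact: setUC.
by rewrite esymE.
Qed.

Lemma even_ent (a : hvert T) : ~~ odd a.2 -> exists2 d, e d.1 d.2 & ent d = a.
Proof.
move=> ha; exists (nbn a.1 a.2, a.1); first by rewrite /= esymE nbn_in.
rewrite /ent /= idx_nbn -(negbTE ha) prep_id //.
by rewrite hv_val.
Qed.

Lemma E_cyc E : E \in Fset -> exists2 a : hvert T, ~~ odd a.2 & E \in Cyc a.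
Proof.
case/setUP => /imsetP[x _ ->]; case ho: (odd x.2).
- exists (mu x); first by rewrite mu_odd ho.
  have [h _] := Cyc_self (mu x).
  by rewrite muK setUC in h.
- exists x; first by rewrite ho.
  by have [h1 h2] := Cyc_self x.
- exists (om x); first by rewrite om_odd ho.
  have [_ h] := Cyc_self (om x).
  by rewrite omK setUC in h.
- exists x; first by rewrite ho.
  by have [h1 h2] := Cyc_self x.
Qed.

Lemma faces_eq : faces e rotm = cycle_subgraphs e idx Mset.
Proof.
rewrite /cycle_subgraphs.
have -> : Mset :|: white_edges e idx = Fset by rewrite white_eq.
apply/setP => G; apply/imsetP/imsetP.
  case=> d; rewrite inE => hd ->; exists (Cyc (ent d)); last exact: face_cyc.
  apply/imsetP; exists [set ent d; mu (ent d)].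
    by apply/setUP; left; apply: imset_f.
  have [h _] := Cyc_self (ent d).
  by rewrite (comp_Cyc h).
case=> C /imsetP[E hE ->] ->.
have [a ha hEa] := E_cyc hE.
have [d hd hda] := even_ent ha.
exists d; first by rewrite inE.
by rewrite face_cyc // hda (comp_Cyc hEa).
Qed.

Lemma union_MW : Mset :|: white_edges e idx =
  (Mset :\: white_edges e idx) :|: (white_edges e idx :\: Mset).
Proof.
rewrite white_eq -/Wset.
rewrite (setDidPl MW_disj).
by have /setDidPl -> : [disjoint Wset & Mset] by rewrite disjoint_sym MW_disj.
Qed.

Lemma duc : disjoint_union_of_cycles (Mset :|: white_edges e idx).
Proof.
rewrite white_eq -/Wset; split; last by move=> x; right; apply: deg_F2.
move=> E /setUP[] /imsetP[x _ ->]; rewrite cards2.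
  by rewrite eq_sym mu_neq.
suff -> : x != om x by [].
by apply/eqP => h; move: (om_neq1 x); rewrite -h eqxx.
Qed.

End Mu.

Lemma blue_shape E : E \in blue_edges T -> exists p q : hvert T,
  [/\ E = [set p; q], p != q, q.1 = p.1 & nat_of_ord q.2 = (p.2).+1 %% 6].
Proof.
rewrite inE => /existsP[v /existsP[i /eqP ->]].
exists (hv v i), (hv v i.+1); split => //.
- apply/eqP => /(congr1 (fun x : hvert T => nat_of_ord x.2)).
  rewrite !hv2; case: i => [[|[|[|[|[|[|]]]]]]] //.
- by rewrite hv2 hv2 (modn_small (ltn_ord i)).
Qed.

Section Fwd.
Variable M : {set {set hvert T}}.
Hypothesis hM : blue_perfect_matching e idx M.

Lemma M_one x : exists2 E, E \in M & [set E in M | x \in E] = [set E].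
Proof.
case: hM => [[_ hd] _]; have := hd x; rewrite /deg_in => /eqP /cards1P[E hE].
exists E => //.
have : E \in [set E in M | x \in E] by rewrite hE set11.
by rewrite inE => /andP[].
Qed.

Lemma M_uniq x E1 E2 : E1 \in M -> E2 \in M -> x \in E1 -> x \in E2 -> E1 = E2.
Proof.
move=> h1 h2 x1 x2; case: (M_one x) => E _ hE.
have : E1 \in [set E in M | x \in E] by rewrite inE h1 x1.
have : E2 \in [set E in M | x \in E] by rewrite inE h2 x2.
by rewrite hE => /set1P -> /set1P ->.
Qed.

Lemma M_blue E : E \in M -> E \in blue_edges T.
Proof. by case: hM => _ /subsetP; apply. Qed.

Lemma M_ex x : exists y, [set x; y] \in M.
Proof.
case: (M_one x) => E hE h.
have : E \in [set E in M | x \in E] by rewrite h set11.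
rewrite inE hE /= => hx.
case: (blue_shape (M_blue hE)) => p [q [hpq _ _ _]].
move: hx; rewrite hpq => /set2P[] ->.
  by exists q; rewrite -hpq.
by exists p; rewrite setUC -hpq.
Qed.

Definition mate x := odflt x [pick y | [set x; y] \in M].

Lemma mate_in x : [set x; mate x] \in M.
Proof.
rewrite /mate; case: pickP => [y // | H].
by case: (M_ex x) => y; rewrite H.
Qed.

Lemma mateK x : mate (mate x) = x.
Proof.
have h1 := mate_in (mate x).
have h2 : [set mate x; x] \in M by rewrite setUC mate_in.
have := M_uniq h1 h2 (set21 _ _) (set21 _ _).
case: (blue_shape (M_blue h1)) => p [q [hpq npq _ _]] h.
have : mate (mate x) \in [set mate x; x] by rewrite -h set22.
case/set2P => // hm.
move: hpq; rewrite hm setUid => hpq.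
have hp : p \in [set mate x] by rewrite hpq set21.
have hq : q \in [set mate x] by rewrite hpq set22.
by move/set1P: hp npq => ->; move/set1P: hq => ->; rewrite eqxx.
Qed.

Lemma mate_blue x : (mate x).1 = x.1 /\
  (nat_of_ord (mate x).2 = (x.2).+1 %% 6 \/ nat_of_ord x.2 = ((mate x).2).+1 %% 6).
Proof.
have h := mate_in x.
case: (blue_shape (M_blue h)) => p [q [hpq npq h1 h2]].
case: (set2_eq hpq npq) => -[-> ->]; auto.
Qed.

Lemma M_eq : M = Mset mate.
Proof.
apply/setP => E; apply/idP/imsetP.
  move=> hE; case: (blue_shape (M_blue hE)) => p [q [hpq _ _ _]].
  exists p => //; apply: (M_uniq (x := p) hE (mate_in p)).
    by rewrite hpq set21.
  exact: set21.
by case=> x _ ->; apply: mate_in.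
Qed.

End Fwd.

Section Conv.
Variable rot : T -> T -> T.
Hypothesis hrot : rotation_system e rot.

Lemma rot_facts v u : e v u ->
  [/\ e v (rot v u), rot v (rot v (rot v u)) = u, rot v u != u & rot v (rot v u) != u].
Proof.
move=> hvu; case: (hrot v) => hin hinj hcyc.
have nf := cyc_nofix (card_nbhd v) hcyc.
have hu : u \in nbhd e v by rewrite in_nbhd.
case: (three_orbit (card_nbhd v) hin hinj nf hu) => _ h3.
split => //.
- by rewrite -in_nbhd hin.
- exact: nf.
- apply/eqP => h; move: (nf _ hu).
  by rewrite -{2}h3 h eqxx.
Qed.

Definition muc (x : hvert T) : hvert T :=
  let v := x.1 in let i := x.2 in let u := nbn v i in
  hv v (prep (~~ odd i) (idx v (if odd i then rot v (rot v u) else rot v u))).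

Lemma muc1 x : (muc x).1 = x.1. Proof. by []. Qed.
Lemma muc2 x : nat_of_ord (muc x).2 =
  prep (~~ odd x.2) (idx x.1 (if odd x.2 then rot x.1 (rot x.1 (nbn x.1 x.2)) else rot x.1 (nbn x.1 x.2))).
Proof. by rewrite hv2 modn_small // prep_lt. Qed.

Lemma mucK x : muc (muc x) = x.
Proof.
case: x => v i.
have hu := nbn_in v i.
set u := nbn v i.
case: (rot_facts hu) => h1 h3 _ _.
have h2 : e v (rot v (rot v u)) by case: (rot_facts h1).
have hiu : (idx v u : nat) = i %% 3 by rewrite idx_nbn.
rewrite {1}/muc muc1 muc2 /=.
case ho: (odd i) => /=.
- rewrite prep_odd // /= -nbn_mod prep_mod // nbn_idx // h3 hiu.
  by rewrite -ho prep_id // (hv_val (v, i)).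
- rewrite prep_odd // /= -nbn_mod prep_mod // nbn_idx // h3 hiu.
  by rewrite -ho prep_id // (hv_val (v, i)).
Qed.

Lemma muc_blue x : (muc x).1 = x.1 /\
  (nat_of_ord (muc x).2 = (x.2).+1 %% 6 \/ nat_of_ord x.2 = ((muc x).2).+1 %% 6).
Proof.
split => //; rewrite muc2; apply: prep_blue => //.
case: x => v i /=.
have hu := nbn_in v i.
case: (rot_facts hu) => h1 _ n1 n2.
have h2 : e v (rot v (rot v (nbn v i))) by case: (rot_facts h1).
rewrite -(idx_nbn v i); apply/eqP => /val_inj h.
have hi : {in nbhd e v &, injective (idx v)} := @hidx v.
case: (odd i) h => h.
  have := hi _ _ _ _ h; rewrite !in_nbhd => /(_ h2 hu) h'.
  by move: n2; rewrite h' eqxx.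
have := hi _ _ _ _ h; rewrite !in_nbhd => /(_ h1 hu) h'.
by move: n1; rewrite h' eqxx.
Qed.

Lemma rotm_muc v u : e v u -> rotm muc v u = rot v u.
Proof.
move=> hvu; rewrite /rotm muc2 ent1 ent_odd /=.
have hp : prep false (idx v u) < 6 by rewrite prep_lt.
rewrite inordK ?ltn_pmod // (modn_small hp).
rewrite -[nbn v (prep false _)]nbn_mod prep_mod // (nbn_idx hvu).
case: (rot_facts hvu) => h1 _ _ _.
by rewrite -nbn_mod prep_mod // (nbn_idx h1).
Qed.

End Conv.

Lemma faces_agree (r1 r2 : T -> T -> T) :
  (forall u v, e u v -> r1 v u = r2 v u) -> (forall u v, e u v -> e v (r1 v u)) ->
  faces e r1 = faces e r2.
Proof.
move=> heq hin.
have hstep : forall d, e d.1 d.2 -> face_step r1 d = face_step r2 d /\ e (face_step r1 d).1 (face_step r1 d).2.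
  by case=> u v h; rewrite /face_step /=; split; [rewrite heq | apply: hin].
have hit : forall n d, e d.1 d.2 -> iter n (face_step r1) d = iter n (face_step r2) d /\
   e (iter n (face_step r1) d).1 (iter n (face_step r1) d).2.
  move=> n d hd; elim: n => [|n [IH1 IH2]] //=.
  by rewrite -IH1; case: (hstep _ IH2) => <- ->.
rewrite /faces; apply: eq_in_imset => d; rewrite inE => hd.
rewrite /face_edges.
suff -> : [set d' | fconnect (face_step r1) d d'] = [set d' | fconnect (face_step r2) d d'] by [].
apply/setP => d'; rewrite !inE.
apply/idP/idP.
  move/iter_findex => <-; case: (hit (findex (face_step r1) d d') d hd) => -> _.
  exact: fconnect_iter.
move/iter_findex => <-; case: (hit (findex (face_step r2) d d') d hd) => <- _.
exact: fconnect_iter.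
Qed.

End Main.

Unset Implicit Arguments.
Set Strict Implicit.

Theorem mainTheorem1 (T : finType) (e : rel T) (idx : T -> T -> 'I_3) :
  cubic e -> index_assignment e idx ->
  (forall M : {set {set hvert T}}, blue_perfect_matching e idx M ->
     [/\ M :|: white_edges e idx =
           (M :\: white_edges e idx) :|: (white_edges e idx :\: M),
         disjoint_union_of_cycles (M :|: white_edges e idx) &
         exists rot : T -> T -> T,
           rotation_system e rot /\ faces e rot = cycle_subgraphs e idx M])
  /\
  (forall rot : T -> T -> T, rotation_system e rot ->
     exists M : {set {set hvert T}},
       blue_perfect_matching e idx M /\ faces e rot = cycle_subgraphs e idx M).
Proof.
move=> hc hi; split.
  move=> M hM; rewrite (M_eq hM).
  have K := mateK hM; have B := mate_blue hM.
  split.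
  - exact: (union_MW hc hi B).
  - exact: (duc hc hi K B).
  - exists (rotm e idx (mate M)); split.
      exact: (rotm_sys hc hi K B).
    exact: (faces_eq hc hi K B).
move=> rot hrot.
have K := mucK hc hi hrot; have B := muc_blue hc hi hrot.
exists (Mset (muc e idx rot)); split; first exact: Mset_bpm.
rewrite -(faces_eq hc hi K B); apply/esym.
apply: faces_agree => u v huv.
  by rewrite (esymE hc) in huv; rewrite (rotm_muc hc hi hrot huv).
exact: (rotm_in hc hi).
Qed.
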